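(* Let $\mathcal{D}$ be a hybrid basic action theory containing the action $\mathit{noOp}$, let $\varphi$ be an effect and $\sigma$ a situation. Then: (1) $\mathcal{D}\models\exists a,ts.\,\mathit{PrimCause}(a,ts,\varphi,\sigma)\supset\exists\sigma'.\,\mathit{DefusedSit}(\varphi,\sigma,\sigma')$; (2) $\mathcal{D}\models\forall a_1,ts_1,\sigma_1,a_2,ts_2,\sigma_2.\;\mathit{PreempContr}(a_1,ts_1,\sigma_1,\varphi,\sigma)\land\mathit{PreempContr}(a_2,ts_2,\sigma_2,\varphi,\sigma)\land|\sigma_1|=|\sigma_2|\supset\sigma_1=\sigma_2$; (3) $\mathcal{D}\models\forall\sigma',\sigma''.\;\mathit{DefusedSit}(\varphi,\sigma,\sigma')\land\mathit{DefusedSit}(\varphi,\sigma,\sigma'')\supset\sigma'=\sigma''$; (4) $\mathcal{D}\models\forall\sigma'.\;\mathit{DefusedSit}(\varphi,\sigma,\sigma')\supset\neg\exists b,ts_b.\,\mathit{PrimCause}(b,ts_b,\varphi,\sigma')$.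
   Context: Hybrid temporal situation calculus (HTSC): $S_0$ initial situation, $do(a,s)$ successor situation. $s\sqsubset s'$: $s'$ reachable from $s$ by one or more actions; $s\sqsubseteq s'$: $s\sqsubset s'\lor s=s'$. $\mathit{time}(a(\vec x,t))=t$, $\mathit{start}(do(a,s))=\mathit{time}(a)$. $\mathit{Exec}(s)\doteq\forall a,s'.(do(a,s')\sqsubseteq s\supset\mathit{Poss}(a,s')\land\mathit{start}(s')\le\mathit{time}(a))$; $s<s'$ abbreviates $s\sqsubset s'\land\mathit{Exec}(s')$; $s\le s'$ abbreviates $s<s'\lor s=s'$. $\mathit{timeStamp}(S_0)=0$, $\mathit{timeStamp}(do(a,s))=\mathit{timeStamp}(s)+1$. A hybrid basic action theory $\mathcal{D}$ contains initial-state, precondition, successor-state (discrete fluents), state evolution (temporal fluents), unique-names and foundational axioms. A temporal fluent $f$ has state evolution axiom $f(\vec x,t,s)=y\equiv[\bigvee_i(\gamma^f_i(\vec x,s)\land\delta_i(\vec x,y,t,s))\lor(y=f(\vec x,\mathit{start}(s),s)\land\neg\bigvee_i\gamma^f_i(\vec x,s))]$ with mutually exclusive contexts $\gamma^f_i$. An effect $\varphi$ is a situation- and time-suppressed formula, uniform in the situation, constraining the value of one primitive temporal fluent $f$; $\varphi[t,s]$ restores time $t$ and situation $s$; $\psi[s]$ restores $s$ in situation-suppressed $\psi$. $\mathit{noOp}(t)$ is an action (with $\mathit{time}(\mathit{noOp}(t))=t$) that is always possible and affects no fluent. $\mathit{CausesDir}(a,ts,\psi,s)\doteq\exists s_a.\,\mathit{timeStamp}(s_a)=ts\land(S_0<do(a,s_a)\le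 s)\land\neg\psi[s_a]\land\forall s'.(do(a,s_a)\le s'\le s\supset\psi[s'])$. $\mathit{end}(s',s)=\mathit{start}(s')$ if $s'=s$; $=\mathit{time}(a)$ if $do(a,s')\le s$. $\mathit{AchvSitAux}(s_\varphi,\varphi,s)\doteq\varphi[\mathit{end}(s_\varphi,s),s_\varphi]\land\forall s',t.(s_\varphi<s'\le s\land\mathit{start}(s')\le t\le\mathit{end}(s',s)\supset\varphi[t,s'])$; $\mathit{AchvSit}(s_\varphi,\varphi,s)\doteq\mathit{AchvSitAux}(s_\varphi,\varphi,s)\land\neg\exists s''.(s''<s_\varphi\land\mathit{AchvSitAux}(s'',\varphi,s))$. $\mathit{DirPossContr}(\alpha,s_\alpha,s_\varphi,\sigma,\varphi)\doteq\exists i,ts.\,\mathit{Exec}(s_\alpha)\land\mathit{Poss}(\alpha,s_\alpha)\land\mathit{timeStamp}(s_\alpha)=ts\land s_\alpha<s_\varphi\le\sigma\land\neg\varphi[\mathit{time}(\alpha),s_\alpha]\land\varphi[\mathit{end}(s_\varphi,\sigma),s_\varphi]\land\mathit{CausesDir}(\alpha,ts,\gamma^f_i,s_\varphi)$; $\mathit{DirActContr}(\alpha,s_\alpha,s_\varphi,\varphi,\sigma)\doteq\exists\sigma'.\,\mathit{DirPossContr}(\alpha,s_\alpha,s_\varphi,\sigma',\varphi)\land\sigma'\le\sigma$; $\mathit{PrimCause}(\alpha,ts,\varphi,\sigma)\doteq\exists s_\alpha,s_\varphi.\,\mathit{AchvSit}(s_\varphi,\varphi,\sigma)\land\mathit{timeStamp}(s_\alpha)=ts\land\mathit{DirActContr}(\alpha,s_\alpha,s_\varphi,\varphi,\sigma)$.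 Single-action counterfactual: $\mathit{CF}_{one}(s',s,\langle a',a,ts\rangle)$ holds iff there is $s_{sh}$ with $\mathit{timeStamp}(s_{sh})=ts$, $a\ne a'$, $do(a,s_{sh})\sqsubseteq s$, $do(a',s_{sh})\sqsubseteq s'$, and: for all $a^*,s^*$ with $do(a,s_{sh})\sqsubset do(a^*,s^* )\sqsubseteq s$ there is $s^+$ with $\mathit{timeStamp}(s^+)=\mathit{timeStamp}(s^* )$ and $do(a^*,s^+)\sqsubseteq s'$; and for all $a^*,s^*$ with $do(a',s_{sh})\sqsubset do(a^*,s^* )\sqsubseteq s'$ there is $s^+$ with $\mathit{timeStamp}(s^+)=\mathit{timeStamp}(s^* )$ and $do(a^*,s^+)\sqsubseteq s$. Preempted contributors: $\mathit{PreempContr}$ is the least relation $P(a,ts,\sigma',\varphi,\sigma)$ such that (i) if $\mathit{PrimCause}(a,ts,\varphi,\sigma)$ and $\mathit{CF}_{one}(\sigma',\sigma,\langle\mathit{noOp}(\mathit{time}(a)),a,ts\rangle)$ then $P(a,ts,\sigma',\varphi,\sigma)$; (ii) if $P(a'',ts'',\sigma'',\varphi,\sigma)$, $\mathit{PrimCause}(a',ts',\varphi,\sigma'')$ and $\mathit{CF}_{one}(\sigma',\sigma'',\langle\mathit{noOp}(\mathit{time}(a')),a',ts'\rangle)$ then $P(a',ts',\sigma',\varphi,\sigma)$. $|s|$ is the number of $\mathit{noOp}$ actions in $s$: $|S_0|=0$; $|do(a,s')|=|s'|$ if $a$ is not of the form $\mathit{noOp}(t)$; $|do(\mathit{noOp}(t),s')|=1+|s'|$.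 $\mathit{DefusedSit}(\varphi,\sigma,\sigma')\doteq\exists a',ts'.\,\mathit{PreempContr}(a',ts',\sigma',\varphi,\sigma)\land\forall\sigma'',a'',ts''.\,(\mathit{PreempContr}(a'',ts'',\sigma'',\varphi,\sigma)\land\sigma'\ne\sigma''\supset|\sigma''|<|\sigma'|)$. *)

(* Defs.v *)
(* Semantic rendering of the hybrid temporal situation calculus
   (HTSC): a statement "D |= Phi" for an arbitrary hybrid basic action theory D
   is rendered as "Phi holds in every structure satisfying the axiom schemata of
   a hybrid BAT (with noOp)", the structure being a record [HBAT]. *)
From Stdlib Require Import Reals ClassicalEpsilon Arith.
Open Scope R_scope.
Set Implicit Arguments.
Unset Strict Implicit.

(* Situations: by the foundational axioms every model has (up to isomorphism)
   the tree of finite action sequences rooted at S0. *)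
Inductive sit (A : Type) : Type :=
| S0 : sit A
| do : A -> sit A -> sit A.
Arguments S0 {A}.

Inductive sqsub {A : Type} : sit A -> sit A -> Prop :=
| sqsub_do : forall a s, sqsub s (do a s)
| sqsub_step : forall a s s', sqsub s s' -> sqsub s (do a s').

Definition sqsubeq {A : Type} (s s' : sit A) : Prop := sqsub s s' \/ s = s'.

Fixpoint timeStamp {A : Type} (s : sit A) : nat :=
  match s with S0 => 0%nat | do _ s' => S (timeStamp s') end.

Record HBAT := {
  Act : Type;
  time : Act -> R;
  noOp : R -> Act;
  time_noOp : forall t, time (noOp t) = t;
  startS0 : R;
  Poss : Act -> sit Act -> Prop;
  Poss_noOp : forall t s, Poss (noOp t) s;
  (* discrete fluents: DState is the interpretation of all discrete fluents
     (for all arguments) in a situation; successor-state axioms are uniform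
     in s, hence dstate (do a s) is a function of a and dstate s *)
  DState : Type;
  dstate : sit Act -> DState;
  ssa : Act -> DState -> DState;
  dstate_do : forall a s, dstate (do a s) = ssa a (dstate s);
  ssa_noOp : forall t d, ssa (noOp t) d = d;
  (* temporal fluents: TFl = primitive temporal fluents applied to arguments x *)
  TFl : Type;
  TVal : Type;
  tval : TFl -> R -> sit Act -> TVal;
  Ctx : TFl -> Type;
  ctx : forall f, Ctx f -> DState -> Prop;   (* gamma^f_i, uniform in s (discrete fluents) *)
  ctx_excl : forall f (i j : Ctx f) d, i <> j -> ctx i d -> ctx j d -> False;
  delta : forall f, Ctx f -> TVal -> R -> sit Act -> Prop;
  sea : forall f t s y,
      tval f t s = y <->
      ((exists i : Ctx f, ctx i (dstate s) /\ delta i y t s) \/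
       (y = tval f (match s with S0 => startS0 | do a _ => time a end) s /\
        ~ (exists i : Ctx f, ctx i (dstate s))));
  tval_noOp : forall f t t' s, t <= t' -> tval f t' (do (noOp t) s) = tval f t' s
}.

Section HTSC.
Variable D : HBAT.
Notation Act := (Act D).
Notation Sit := (sit Act).

Definition start (s : Sit) : R :=
  match s with S0 => startS0 D | do a _ => time a end.

Definition Exec (s : Sit) : Prop :=
  forall a s', sqsubeq (do a s') s -> Poss a s' /\ start s' <= time a.

Definition slt (s s' : Sit) : Prop := sqsub s s' /\ Exec s'.
Definition sle (s s' : Sit) : Prop := slt s s' \/ s = s'.

Fixpoint nextTime (k : nat) (s : Sit) : R :=
  match s with
  | S0 => 0
  | do a s0 => if Nat.eqb (timeStamp s0) k then time a else nextTime k s0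
  end.

(* end(s',s) = start(s') if s' = s;  = time(a) if do(a,s') <= s.
   (On its intended domain s' <= s this is exactly the paper's definition;
   prefixes of s are identified by their timestamps.) *)
Definition endt (s' s : Sit) : R :=
  if Nat.eqb (timeStamp s') (timeStamp s) then start s' else nextTime (timeStamp s') s.

Record effect := { eff_fl : TFl D; eff_pred : TVal D -> Prop }.

Definition holds (phi : effect) (t : R) (s : Sit) : Prop :=
  eff_pred phi (tval (eff_fl phi) t s).

(* psi[s] for a situation-suppressed (uniform) formula given by its meaning *)
Definition CausesDir (a : Act) (ts : nat) (psi : Sit -> Prop) (s : Sit) : Prop :=
  exists sa, timeStamp sa = ts /\ slt S0 (do a sa) /\ sle (do a sa) s /\
    ~ psi sa /\ (forall s', sle (do a sa) s' -> sle s' s -> psi s').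

Definition AchvSitAux (sphi : Sit) (phi : effect) (s : Sit) : Prop :=
  holds phi (endt sphi s) sphi /\
  (forall s' t, slt sphi s' -> sle s' s -> start s' <= t -> t <= endt s' s ->
     holds phi t s').

Definition AchvSit (sphi : Sit) (phi : effect) (s : Sit) : Prop :=
  AchvSitAux sphi phi s /\ ~ (exists s'', slt s'' sphi /\ AchvSitAux s'' phi s).

Definition DirPossContr (alpha : Act) (salpha sphi sigma : Sit) (phi : effect) : Prop :=
  exists (i : Ctx (eff_fl phi)) (ts : nat),
    Exec salpha /\ Poss alpha salpha /\ timeStamp salpha = ts /\
    slt salpha sphi /\ sle sphi sigma /\
    ~ holds phi (time alpha) salpha /\ holds phi (endt sphi sigma) sphi /\
    CausesDir alpha ts (fun s => ctx i (dstate s)) sphi.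

Definition DirActContr (alpha : Act) (salpha sphi : Sit) (phi : effect) (sigma : Sit) : Prop :=
  exists sigma', DirPossContr alpha salpha sphi sigma' phi /\ sle sigma' sigma.

Definition PrimCause (alpha : Act) (ts : nat) (phi : effect) (sigma : Sit) : Prop :=
  exists salpha sphi, AchvSit sphi phi sigma /\ timeStamp salpha = ts /\
    DirActContr alpha salpha sphi phi sigma.

Definition CF_one (s' s : Sit) (a' a : Act) (ts : nat) : Prop :=
  exists ssh, timeStamp ssh = ts /\ a <> a' /\
    sqsubeq (do a ssh) s /\ sqsubeq (do a' ssh) s' /\
    (forall astar sstar, sqsub (do a ssh) (do astar sstar) -> sqsubeq (do astar sstar) s ->
       exists splus, timeStamp splus = timeStamp sstar /\ sqsubeq (do astar splus) s') /\
    (forall astar sstar, sqsub (do a' ssh) (do astar sstar) -> sqsubeq (do astar sstar) s' ->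
       exists splus, timeStamp splus = timeStamp sstar /\ sqsubeq (do astar splus) s).

Inductive PreempContr (phi : effect) (sigma : Sit) : Act -> nat -> Sit -> Prop :=
| pc_base : forall a ts sigma',
    PrimCause a ts phi sigma ->
    CF_one sigma' sigma (@noOp D (time a)) a ts ->
    PreempContr phi sigma a ts sigma'
| pc_step : forall a'' ts'' sigma'' a' ts' sigma',
    PreempContr phi sigma a'' ts'' sigma'' ->
    PrimCause a' ts' phi sigma'' ->
    CF_one sigma' sigma'' (@noOp D (time a')) a' ts' ->
    PreempContr phi sigma a' ts' sigma'.

Definition isNoOp (a : Act) : Prop := exists t, a = @noOp D t.

(* |s| : number of noOp actions in s *)
Fixpoint noOpCount (s : Sit) : nat :=
  match s with
  | S0 => 0%nat
  | do a s' => ((if excluded_middle_informative (isNoOp a) then 1 else 0) + noOpCount s')%nat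
  end.

Definition DefusedSit (phi : effect) (sigma sigma' : Sit) : Prop :=
  exists a' ts', PreempContr phi sigma a' ts' sigma' /\
    forall sigma'' a'' ts'', PreempContr phi sigma a'' ts'' sigma'' -> sigma' <> sigma'' ->
      (noOpCount sigma'' < noOpCount sigma')%nat.

End HTSC.

(* Main.v *)
Require Import Defs.
From Stdlib Require Import Reals Lia Classical Arith ClassicalEpsilon.
Open Scope nat_scope.
Set Implicit Arguments. Unset Strict Implicit.

Fixpoint act_at {A : Type} (k : nat) (s : sit A) : option A :=
  match s with S0 => None | do a s0 => if Nat.eqb (timeStamp s0) k then Some a else act_at k s0 end.

Fixpoint replace {A : Type} (k : nat) (a' : A) (s : sit A) : sit A :=
  match s with S0 => S0
  | do a s0 => if Nat.eqb (timeStamp s0) k then do a' s0 else do a (replace k a' s0) end.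

Ltac dec := repeat match goal with
  | |- context [Nat.eqb ?x ?y] => destruct (Nat.eqb_spec x y)
  | |- context [Nat.ltb ?x ?y] => destruct (Nat.ltb_spec x y)
  | H : context [Nat.eqb ?x ?y] |- _ => destruct (Nat.eqb_spec x y)
  end.

Lemma sqsub_ts {A} (s s' : sit A) : sqsub s s' -> timeStamp s < timeStamp s'.
Proof. induction 1; simpl; lia. Qed.

Lemma sqsubeq_ts {A} (s s' : sit A) : sqsubeq s s' -> timeStamp s <= timeStamp s'.
Proof. intros [H|H]; [apply sqsub_ts in H; lia| subst; lia]. Qed.

Lemma sqsub_trans {A} (x y z : sit A) : sqsub x y -> sqsub y z -> sqsub x z.
Proof. intros H1 H2; induction H2; [apply sqsub_step; auto | apply sqsub_step; auto]. Qed.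

Lemma sqsubeq_trans {A} (x y z : sit A) : sqsubeq x y -> sqsubeq y z -> sqsubeq x z.
Proof.
  intros [H1|H1] [H2|H2]; subst; unfold sqsubeq; auto.
  left; eapply sqsub_trans; eauto.
Qed.

Lemma sqsub_do_inv {A} (p s : sit A) a : sqsub p (do a s) -> sqsubeq p s.
Proof. intros H; inversion H; subst; unfold sqsubeq; auto. Qed.

Lemma sqsubeq_do_inv {A} (p s : sit A) a : sqsubeq p (do a s) -> p = do a s \/ sqsubeq p s.
Proof. intros [H|H]; auto. right; eapply sqsub_do_inv; eauto. Qed.

Lemma sqsubeq_S0 {A} (p : sit A) : sqsubeq p S0 -> p = S0.
Proof. intros [H|H]; auto. inversion H. Qed.

Lemma sqsubeq_step {A} (p s : sit A) a : sqsubeq p s -> sqsubeq p (do a s).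
Proof. intros H; eapply sqsubeq_trans; eauto. left; constructor. Qed.

Lemma prefix_total {A} (s p q : sit A) : sqsubeq p s -> sqsubeq q s -> sqsubeq p q \/ sqsubeq q p.
Proof.
  revert p q; induction s as [|a s0 IH]; intros p q Hp Hq.
  - apply sqsubeq_S0 in Hp; apply sqsubeq_S0 in Hq; subst; left; right; auto.
  - apply sqsubeq_do_inv in Hp; apply sqsubeq_do_inv in Hq.
    destruct Hp as [Hp|Hp]; [subst; right; destruct Hq as [Hq|Hq]; [subst; right; auto| apply sqsubeq_step; auto]|].
    destruct Hq as [Hq|Hq]; [subst; left; apply sqsubeq_step; auto|].
    auto.
Qed.

Lemma prefix_le {A} (s p q : sit A) : sqsubeq p s -> sqsubeq q s -> timeStamp p <= timeStamp q -> sqsubeq p q.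
Proof.
  intros Hp Hq Hl. destruct (prefix_total Hp Hq) as [H|[H|H]]; auto.
  apply sqsub_ts in H; lia. subst; right; auto.
Qed.

Lemma prefix_eq {A} (s p q : sit A) : sqsubeq p s -> sqsubeq q s -> timeStamp p = timeStamp q -> p = q.
Proof.
  intros Hp Hq Hl. destruct (prefix_le Hp Hq) as [H|H]; try lia; auto.
  apply sqsub_ts in H; lia.
Qed.

Lemma prefix_lt {A} (s p q : sit A) : sqsubeq p s -> sqsubeq q s -> timeStamp p < timeStamp q -> sqsub p q.
Proof.
  intros Hp Hq Hl. destruct (prefix_le Hp Hq) as [H|H]; try lia; auto. subst; lia.
Qed.

Lemma act_at_None {A} (s : sit A) k : timeStamp s <= k -> act_at k s = None.
Proof. induction s; simpl; intros; auto. dec; [lia|]. apply IHs; lia. Qed.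

Lemma act_at_lt {A} (s : sit A) k a : act_at k s = Some a -> k < timeStamp s.
Proof. intros H. destruct (le_lt_dec (timeStamp s) k); auto. rewrite act_at_None in H; auto; discriminate. Qed.

Lemma act_at_Some1 {A} (s : sit A) k a : act_at k s = Some a -> exists p, timeStamp p = k /\ sqsubeq (do a p) s.
Proof.
  induction s as [|b s0 IH]; simpl; intros H; [discriminate|].
  dec. - inversion H; subst. exists s0; split; auto; right; auto.
  - destruct (IH H) as (p & H1 & H2). exists p; split; auto. apply sqsubeq_step; auto.
Qed.

Lemma act_at_Some2 {A} (s p : sit A) a : sqsubeq (do a p) s -> act_at (timeStamp p) s = Some a.
Proof.
  induction s as [|b s0 IH]; intros H.
  - apply sqsubeq_S0 in H; discriminate.
  - apply sqsubeq_do_inv in H. destruct H as [H|H].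
    + inversion H; subst; simpl; dec; auto; lia.
    + simpl. pose proof (sqsubeq_ts H); simpl in *. dec; [lia|]. auto.
Qed.

Lemma prefix_act {A} (s p : sit A) k : sqsubeq p s -> k < timeStamp p -> act_at k s = act_at k p.
Proof.
  intros [H|H] Hk; [|subst; auto].
  induction H; simpl; dec; auto; try lia.
  apply sqsub_ts in H; lia.
Qed.

Lemma act_ext {A} (s s' : sit A) : (forall k, act_at k s = act_at k s') -> s = s'.
Proof.
  revert s'; induction s as [|a s0 IH]; intros s' H.
  - destruct s' as [|b s1]; auto. specialize (H (timeStamp s1)); simpl in H; dec; [discriminate|lia].
  - destruct s' as [|b s1].
    + specialize (H (timeStamp s0)); simpl in H; dec; [discriminate|lia].
    + assert (E : timeStamp s0 = timeStamp s1).
      { destruct (lt_eq_lt_dec (timeStamp s0) (timeStamp s1)) as [[L|L]|L]; auto.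
        - specialize (H (timeStamp s1)); simpl in H; dec; try lia.
          rewrite act_at_None in H; [discriminate|lia].
        - specialize (H (timeStamp s0)); simpl in H; dec; try lia.
          rewrite act_at_None in H; [discriminate|lia]. }
      assert (a = b). { specialize (H (timeStamp s0)); simpl in H; dec; try lia; congruence. }
      subst. f_equal. apply IH. intros k.
      destruct (Nat.eq_dec k (timeStamp s1)).
      * rewrite !act_at_None; auto; lia.
      * specialize (H k); simpl in H; dec; try lia; auto.
Qed.

Lemma replace_ts {A} k (a' : A) s : timeStamp (replace k a' s) = timeStamp s.
Proof. induction s; simpl; auto; dec; simpl; auto. Qed.

Lemma act_at_replace {A} j k (a' : A) s :
  act_at j (replace k a' s) = if (Nat.eqb j k && Nat.ltb k (timeStamp s))%bool then Some a' else act_at j s.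
Proof.
  induction s as [|b s0 IH]; simpl.
  - destruct (Nat.eqb j k); auto.
  - destruct (Nat.eqb_spec (timeStamp s0) k).
    + subst k. simpl. destruct (Nat.eqb_spec j (timeStamp s0)); destruct (Nat.eqb_spec (timeStamp s0) j); try lia; simpl; auto.
      destruct (Nat.ltb_spec (timeStamp s0) (S (timeStamp s0))); simpl; auto; lia.
    + simpl. rewrite replace_ts, IH.
      destruct (Nat.eqb_spec j k); destruct (Nat.eqb_spec (timeStamp s0) j); simpl; auto; try lia.
      destruct (Nat.ltb_spec k (timeStamp s0)); destruct (Nat.ltb_spec k (S (timeStamp s0))); simpl; auto; lia.
Qed.

Lemma CF_char {A} (s' s : sit A) a' a ts :
  (exists ssh, timeStamp ssh = ts /\ a <> a' /\
    sqsubeq (do a ssh) s /\ sqsubeq (do a' ssh) s' /\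
    (forall astar sstar, sqsub (do a ssh) (do astar sstar) -> sqsubeq (do astar sstar) s ->
       exists splus, timeStamp splus = timeStamp sstar /\ sqsubeq (do astar splus) s') /\
    (forall astar sstar, sqsub (do a' ssh) (do astar sstar) -> sqsubeq (do astar sstar) s' ->
       exists splus, timeStamp splus = timeStamp sstar /\ sqsubeq (do astar splus) s)) ->
  s' = replace ts a' s /\ act_at ts s = Some a /\ a <> a'.
Proof.
  intros (ssh & Hts & Hne & H1 & H2 & C1 & C2).
  assert (Ha : act_at ts s = Some a) by (subst; apply act_at_Some2; auto).
  split; [|split; auto].
  apply act_ext; intros k. rewrite act_at_replace.
  pose proof (act_at_lt Ha) as Hl.
  destruct (lt_eq_lt_dec k ts) as [[L|L]|L].
  - dec; try lia. simpl.
    rewrite (prefix_act (k:=k) H2), (prefix_act (k:=k) H1) by (simpl; lia). simpl; dec; auto; lia.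
  - subst. dec; try lia. simpl. apply act_at_Some2; auto.
  - dec; try lia. simpl.
    destruct (act_at k s') as [b|] eqn:E1.
    + destruct (act_at_Some1 E1) as (p & Hp & Hp2).
      assert (Hsq : sqsub (do a' ssh) (do b p)) by (eapply prefix_lt; eauto; simpl; lia).
      destruct (C2 _ _ Hsq Hp2) as (q & Hq & Hq2). rewrite <- Hp, <- Hq. symmetry; apply act_at_Some2; auto.
    + destruct (act_at k s) as [c|] eqn:E2; auto.
      destruct (act_at_Some1 E2) as (p & Hp & Hp2).
      assert (Hsq : sqsub (do a ssh) (do c p)) by (eapply prefix_lt; eauto; simpl; lia).
      destruct (C1 _ _ Hsq Hp2) as (q & Hq & Hq2). apply act_at_Some2 in Hq2. congruence.
Qed.

Lemma CF_exists {A} (s : sit A) a' a ts :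
  act_at ts s = Some a -> a <> a' ->
  (exists ssh, timeStamp ssh = ts /\ a <> a' /\
    sqsubeq (do a ssh) s /\ sqsubeq (do a' ssh) (replace ts a' s) /\
    (forall astar sstar, sqsub (do a ssh) (do astar sstar) -> sqsubeq (do astar sstar) s ->
       exists splus, timeStamp splus = timeStamp sstar /\ sqsubeq (do astar splus) (replace ts a' s)) /\
    (forall astar sstar, sqsub (do a' ssh) (do astar sstar) -> sqsubeq (do astar sstar) (replace ts a' s) ->
       exists splus, timeStamp splus = timeStamp sstar /\ sqsubeq (do astar splus) s)).
Proof.
  intros Ha Hne. pose proof (act_at_lt Ha) as Hl.
  destruct (act_at_Some1 Ha) as (p & Hp & Hp2).
  assert (Hr : act_at ts (replace ts a' s) = Some a') by (rewrite act_at_replace; dec; simpl; auto; lia).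
  destruct (act_at_Some1 Hr) as (p' & Hp' & Hp'2).
  assert (p' = p).
  { apply act_ext; intros k. destruct (le_lt_dec ts k).
    - rewrite !act_at_None; auto; lia.
    - transitivity (act_at k (do a' p')). simpl; dec; auto; lia.
      rewrite <- (prefix_act (k:=k) Hp'2) by (simpl; lia).
      rewrite act_at_replace. dec; simpl; try lia.
      rewrite (prefix_act (k:=k) Hp2) by (simpl; lia). simpl; dec; auto; lia. }
  subst p'. exists p; repeat split; auto.
  - intros b q Hq Hq2. apply sqsub_ts in Hq; simpl in Hq.
    apply act_at_Some2 in Hq2.
    assert (act_at (timeStamp q) (replace ts a' s) = Some b) by (rewrite act_at_replace; dec; simpl; auto; lia).
    destruct (act_at_Some1 H) as (r & Hr1 & Hr2). eauto.
  - intros b q Hq Hq2. apply sqsub_ts in Hq; simpl in Hq.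
    apply act_at_Some2 in Hq2. rewrite act_at_replace in Hq2. dec; simpl in Hq2; try lia.
    destruct (act_at_Some1 Hq2) as (r & Hr1 & Hr2). eauto.
Qed.

Lemma sle_sqsubeq (D : HBAT) (x y : sit (Act D)) : sle x y -> sqsubeq x y.
Proof. intros [[H _]|H]; unfold sqsubeq; auto. Qed.

Lemma Exec_prefix (D : HBAT) (p s : sit (Act D)) : sqsubeq p s -> Exec s -> Exec p.
Proof. intros H1 H2 a s' H3. apply H2. eapply sqsubeq_trans; eauto. Qed.

Lemma sle_intro (D : HBAT) (x y : sit (Act D)) : sqsubeq x y -> Exec y -> sle x y.
Proof. intros [H|H] E; [left; split; auto| right; auto]. Qed.

Lemma PC_analysis (D : HBAT) (phi : effect D) a ts sigma :
  PrimCause a ts phi sigma ->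
  exists sphi (i : Ctx (eff_fl phi)) sa, sqsubeq sphi sigma /\ Exec sphi /\ AchvSit sphi phi sigma /\
    timeStamp sa = ts /\ sqsubeq (do a sa) sphi /\ ~ ctx i (dstate sa) /\
    (forall s', sle (do a sa) s' -> sle s' sphi -> ctx i (dstate s')).
Proof.
  intros (salpha & sphi & Hach & Hts & s1 & (i & ts' & Hex & Hposs & Hts' & Hlt & Hle1 & Hn & Hh &
          (sa & Htsa & Hlt0 & Hle2 & Hnot & Hall)) & Hle3).
  exists sphi, i, sa. split; [|split; [|split; [|split; [|split]]]]; auto.
  - eapply sqsubeq_trans; apply sle_sqsubeq; eauto.
  - apply Hlt.
  - lia.
  - apply sle_sqsubeq; auto.
Qed.

Lemma PC_unique (D : HBAT) (phi : effect D) a1 ts1 a2 ts2 sigma :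
  PrimCause a1 ts1 phi sigma -> PrimCause a2 ts2 phi sigma -> a1 = a2 /\ ts1 = ts2.
Proof.
  intros P1 P2.
  destruct (PC_analysis P1) as (sp1 & i1 & sa1 & S1 & E1 & A1 & T1 & Q1 & N1 & H1).
  destruct (PC_analysis P2) as (sp2 & i2 & sa2 & S2 & E2 & A2 & T2 & Q2 & N2 & H2).
  assert (sp1 = sp2).
  { destruct (prefix_total S1 S2) as [[L|L]|[L|L]]; auto.
    - exfalso. apply (proj2 A2). exists sp1; split; [split; auto| apply A1].
    - exfalso. apply (proj2 A1). exists sp2; split; [split; auto| apply A2]. }
  subst sp2. rename sp1 into sp.
  assert (C1 : ctx i1 (dstate sp)) by (apply H1; [apply sle_intro|right]; auto).
  assert (C2 : ctx i2 (dstate sp)) by (apply H2; [apply sle_intro|right]; auto).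
  destruct (classic (i1 = i2)) as [<-|Hi]; [|exfalso; eapply ctx_excl; eauto].
  assert (Pa1 : sqsubeq sa1 sp) by (eapply sqsubeq_trans; [left; constructor| eauto]).
  assert (Pa2 : sqsubeq sa2 sp) by (eapply sqsubeq_trans; [left; constructor| eauto]).
  destruct (lt_eq_lt_dec (timeStamp sa1) (timeStamp sa2)) as [[L|L]|L].
  - exfalso. apply N2. apply H1.
    + apply sle_intro. apply (prefix_le Q1 Pa2). simpl; lia. eapply Exec_prefix; eauto.
    + apply sle_intro; auto.
  - assert (sa1 = sa2) by (apply (prefix_eq Pa1 Pa2); auto). subst sa2.
    apply act_at_Some2 in Q1. apply act_at_Some2 in Q2. split; [congruence| lia].
  - exfalso. apply N1. apply H2.
    + apply sle_intro. apply (prefix_le Q2 Pa1). simpl; lia. eapply Exec_prefix; eauto.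
    + apply sle_intro; auto.
Qed.

Lemma PC_act (D : HBAT) (phi : effect D) a ts sigma :
  PrimCause a ts phi sigma -> act_at ts sigma = Some a /\ ~ isNoOp a.
Proof.
  intros P. destruct (PC_analysis P) as (sp & i & sa & S & E & A & T & Q & N & H).
  split.
  - subst ts. apply act_at_Some2. eapply sqsubeq_trans; eauto.
  - intros [t Ht]. subst a. apply N.
    assert (ctx i (dstate (do (noOp D t) sa))) by (apply H; [right; auto| apply sle_intro; eauto]).
    rewrite dstate_do, ssa_noOp in H0. auto.
Qed.

Lemma count_le (D : HBAT) (s : sit (Act D)) : noOpCount s <= timeStamp s.
Proof. induction s; simpl; auto. destruct excluded_middle_informative; lia. Qed.

Lemma count_replace (D : HBAT) k t (s : sit (Act D)) a :
  act_at k s = Some a -> ~ isNoOp a -> noOpCount (replace k (noOp D t) s) = S (noOpCount s).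
Proof.
  induction s as [|b s0 IH]; simpl; intros H N; [discriminate|].
  destruct (Nat.eqb_spec (timeStamp s0) k).
  - inversion H; subst. simpl.
    destruct (excluded_middle_informative (isNoOp (noOp D t))) as [_|F]; [|exfalso; apply F; exists t; auto].
    destruct (excluded_middle_informative (isNoOp a)); [contradiction|]. lia.
  - simpl. rewrite IH; auto.
Qed.

Lemma cf_count (D : HBAT) (s' s : sit (Act D)) a ts :
  CF_one s' s (noOp D (time a)) a ts ->
  s' = replace ts (noOp D (time a)) s /\ noOpCount s' = S (noOpCount s) /\ timeStamp s' = timeStamp s.
Proof.
  intros H. destruct (CF_char H) as (E & Ha & Hne). subst s'.
  split; auto. split; [|apply replace_ts].
  eapply count_replace; eauto. intros [t Ht]. apply Hne. rewrite Ht, time_noOp. auto.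
Qed.

Lemma pc_count (D : HBAT) (phi : effect D) sigma a ts s' :
  PreempContr phi sigma a ts s' -> noOpCount sigma < noOpCount s' /\ timeStamp s' = timeStamp sigma.
Proof.
  induction 1 as [a ts s' P C| a'' ts'' s'' a' ts' s' Hp IH P C].
  - destruct (cf_count C) as (_ & H1 & H2). lia.
  - destruct (cf_count C) as (_ & H1 & H2). lia.
Qed.

Lemma part2 (D : HBAT) (phi : effect D) sigma a1 ts1 s1 :
  PreempContr phi sigma a1 ts1 s1 -> forall a2 ts2 s2, PreempContr phi sigma a2 ts2 s2 ->
  noOpCount s1 = noOpCount s2 -> s1 = s2.
Proof.
  induction 1 as [a ts s' P C| a'' ts'' s'' a' ts' s' Hp IH P C]; intros a2 ts2 s2 H2 Hc;
  destruct H2 as [b tb t' P' C'| b'' tb'' t'' b' tb' t' Hp' P' C'].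
  - destruct (PC_unique P P') as [<- <-].
    destruct (cf_count C) as (-> & _). destruct (cf_count C') as (-> & _). auto.
  - destruct (cf_count C) as (_ & H1 & _). destruct (cf_count C') as (_ & H1' & _).
    destruct (pc_count Hp'). lia.
  - destruct (cf_count C) as (_ & H1 & _). destruct (cf_count C') as (_ & H1' & _).
    destruct (pc_count Hp). lia.
  - destruct (cf_count C) as (E1 & H1 & _). destruct (cf_count C') as (E2 & H1' & _).
    assert (s'' = t'') by (eapply IH; eauto; lia). subst t''.
    destruct (PC_unique P P') as [<- <-]. congruence.
Qed.

Lemma max_exists (P : nat -> Prop) B n0 : P n0 -> (forall n, P n -> n <= B) ->
  exists m, P m /\ forall n, P n -> n <= m.
Proof.
  intros H0 HB. assert (forall k n0, P n0 -> B - n0 <= k -> exists m, P m /\ forall n, P n -> n <= m).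
  { induction k; intros n1 Hn1 Hk.
    - exists n1; split; auto. intros n Hn. specialize (HB n Hn). lia.
    - destruct (classic (exists n, P n /\ n1 < n)) as [(n & Hn & Ln)|No].
      + apply (IHk n Hn). specialize (HB n Hn). lia.
      + exists n1; split; auto. intros n Hn. destruct (le_lt_dec n n1); auto.
        exfalso; apply No; eauto. }
  eapply H; eauto.
Qed.
Close Scope nat_scope.
Unset Implicit Arguments.

Theorem lemma7p7 (D : HBAT) (phi : effect D) (sigma : sit (Act D)) :
  ((exists a ts, PrimCause a ts phi sigma) -> exists sigma', DefusedSit phi sigma sigma')
  /\
  (forall a1 ts1 sigma1 a2 ts2 sigma2,
      PreempContr phi sigma a1 ts1 sigma1 -> PreempContr phi sigma a2 ts2 sigma2 ->
      noOpCount sigma1 = noOpCount sigma2 -> sigma1 = sigma2)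
  /\
  (forall sigma' sigma'', DefusedSit phi sigma sigma' -> DefusedSit phi sigma sigma'' ->
      sigma' = sigma'')
  /\
  (forall sigma', DefusedSit phi sigma sigma' -> ~ exists b tsb, PrimCause b tsb phi sigma').
Proof.
  split; [|split; [|split]].
  - intros (a & ts & P).
    destruct (PC_act P) as [Ha Hn].
    assert (Hne : a <> noOp D (time a)) by (intros E; apply Hn; eexists; exact E).
    pose proof (pc_base P (CF_exists Ha Hne)) as B0.
    destruct (max_exists (P := fun n => exists a ts s', PreempContr phi sigma a ts s' /\ noOpCount s' = n)
                (B := timeStamp sigma) (n0 := noOpCount (replace ts (noOp D (time a)) sigma)))
      as (m & (a' & ts' & s' & Hs' & Hm) & Hmax).
    + eauto.
    + intros n (a1 & t1 & s1 & H1 & <-). destruct (pc_count H1) as [_ E].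
      rewrite <- E. apply count_le.
    + exists s', a', ts'. split; auto. intros s'' a'' ts'' H'' Hneq.
      assert (noOpCount s'' <= m)%nat by (apply Hmax; eauto).
      destruct (Nat.eq_dec (noOpCount s'') m); [|lia].
      exfalso; apply Hneq. eapply part2; eauto. congruence.
  - intros. eapply part2; eauto.
  - intros s1 s2 (a1 & t1 & P1 & M1) (a2 & t2 & P2 & M2).
    destruct (classic (s1 = s2)) as [|Hn]; auto.
    specialize (M1 _ _ _ P2 Hn). assert (s2 <> s1) by auto. specialize (M2 _ _ _ P1 H). lia.
  - intros s' (a' & t' & P & M) (b & tb & Pb).
    destruct (PC_act Pb) as [Ha Hn].
    assert (Hne : b <> noOp D (time b)) by (intros E; apply Hn; eexists; exact E).
    pose proof (CF_exists Ha Hne) as C.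
    pose proof (pc_step P Pb C) as P3.
    destruct (cf_count C) as (_ & Hc & _).
    assert (s' <> replace tb (noOp D (time b)) s') by (intros E; rewrite <- E in Hc; lia).
    specialize (M _ _ _ P3 H). lia.
Qed.
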